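(* Let $p$ be a prime. If $G$ is a finite group, then $RG_p(G)=-\frac{1}{|G_{\widehat{p}}|}$.
   Context: $G_{\widehat{p}}$ denotes the pro-$p$ completion of $G$. For a group $A$, $d(A)$ is the minimal number of generators and $d_p(A)=d\big(A/[A,A]A^p\big)$. The $p$-gradient is $RG_p(G)=\inf_H\frac{d_p(H)-1}{[G:H]}$, the infimum over normal subgroups $H\trianglelefteq G$ of $p$-power index. *)

(* Defs.v *)
From HB Require Import structures.
From mathcomp Require Import all_boot all_order all_algebra all_fingroup all_solvable.
Set Implicit Arguments. Unset Strict Implicit. Unset Printing Implicit Defensive.
Import Order.TTheory GRing.Theory Num.Theory.

Local Open Scope group_scope.

Definition dgen (gT : finGroupType) (A : {set gT}) : nat :=
  \big[minn/#|A|]_(S : {set gT} | <<S>> == A) #|S|.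

Definition commpow (gT : finGroupType) (p : nat) (A : {set gT}) : {set gT} :=
  <<[~: A, A] :|: [set x ^+ p | x in A]>>.

Definition dp (gT : finGroupType) (p : nat) (A : {set gT}) : nat :=
  dgen (A / commpow p A).

Definition ppow_normal (gT : finGroupType) (p : nat) (G H : {group gT}) : bool :=
  (H <| G) && p.-nat #|G : H|.

Local Open Scope ring_scope.

Definition RGterm (gT : finGroupType) (p : nat) (G H : {group gT}) : rat :=
  ((dp p H)%:R - 1) / (#|G : H|)%:R.

(* p-gradient: infimum (= minimum, the family being finite and containing G)
   over normal subgroups H of p-power index. *)
Definition RGp (gT : finGroupType) (p : nat) (G : {group gT}) : rat :=
  \big[Num.min/RGterm p G G]_(H : {group gT} | ppow_normal p G H) RGterm p G H.

(* For finite G, the pro-p completion is the inverse limit of the finite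
   p-groups G/N, N normal of p-power index; this is G / N0 where N0 is the
   intersection of all such N. *)
Definition pcompl_core (gT : finGroupType) (p : nat) (G : {group gT}) : {set gT} :=
  \bigcap_(H : {group gT} | ppow_normal p G H) H.

Definition pcompl_order (gT : finGroupType) (p : nat) (G : {group gT}) : nat :=
  #|(G / pcompl_core p G)%g|.

(* Main.v *)
Require Import Defs.
From HB Require Import structures.
From mathcomp Require Import all_boot all_order all_algebra all_fingroup all_solvable.
Import Order.TTheory GRing.Theory Num.Theory.
Set Implicit Arguments. Unset Strict Implicit.

Section GroupPart.
Local Open Scope group_scope.
Variables (p : nat) (gT : finGroupType) (G : {group gT}).
Hypothesis pr : prime p.

Lemma fam_I (H K : {group gT}) :
  ppow_normal p G H -> ppow_normal p G K -> ppow_normal p G (H :&: K)%G.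
Proof.
case/andP=> nH pH /andP[nK pK]; apply/andP; split; first exact: normalI.
have sHG := normal_sub nH.
rewrite /= -(Lagrange_index sHG (subsetIl H K)) pnatM pH /= indexgI.
rewrite -card_quotient ?(subset_trans sHG (normal_norm nK)) //.
apply: pnat_dvd pK; rewrite -card_quotient ?normal_norm //.
by apply: cardSg; apply: quotientS; apply: normal_sub.
Qed.

Definition KG (H : {group gT}) : {group gT} :=
  generated_group ([~: H, H] :|: [set x ^+ p | x in H]).

Lemma KG_sub (H : {group gT}) : KG H \subset H.
Proof.
rewrite /= gen_subG subUset der1_subG /=.
by apply/subsetP => _ /imsetP[x xH ->]; exact: groupX.
Qed.

Lemma pow_norm (H : {group gT}) (A : {set gT}) :
  A \subset 'N(H) -> A \subset 'N([set x ^+ p | x in H]).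
Proof.
move=> nHA; apply/subsetP => x xA; apply/normP.
have sub : [set x0 ^+ p | x0 in H] :^ x \subset [set x0 ^+ p | x0 in H].
  apply/subsetP => y; rewrite mem_conjg => /imsetP[z zH ez].
  apply/imsetP; exists (z ^ x).
    by rewrite memJ_norm // (subsetP nHA).
  by rewrite -conjXg -ez conjgKV.
by apply/eqP; rewrite eqEcard sub cardJg leqnn.
Qed.

Lemma KG_normal (H : {group gT}) : H <| G -> KG H <| G.
Proof.
move=> nH; rewrite /normal (subset_trans (KG_sub H) (normal_sub nH)) /=.
apply: norms_gen; apply: normsU; first by apply: normsR; exact: normal_norm.
by apply: pow_norm; exact: normal_norm.
Qed.

Lemma KG_fam (H : {group gT}) : ppow_normal p G H -> ppow_normal p G (KG H).
Proof.
case/andP=> nH pH; apply/andP; split; first exact: KG_normal.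
have nK := KG_normal nH.
rewrite -(Lagrange_index (normal_sub nH) (KG_sub H)) pnatM pH /=.
rewrite -card_quotient; last first.
  exact: subset_trans (normal_sub nH) (normal_norm nK).
rewrite -[_.-nat _]/(p.-group (H / KG H)) -pnat_exponent.
apply: pnat_dvd (pnat_id pr); apply/exponentP => _ /morphimP[y Ny Hy ->].
rewrite -morphX //= coset_id //; apply: mem_gen; rewrite inE; apply/orP; right.
exact: imset_f.
Qed.

Lemma dgen_pos (rT : finGroupType) (A : {group rT}) : A != 1 :> {set rT} -> (0 < dgen A)%N.
Proof.
move=> ntA; rewrite /dgen; apply: (big_ind (fun n => 0 < n)%N).
- by rewrite cardG_gt0.
- by move=> a b a0 b0; rewrite leq_min a0.
move=> S /eqP eS; rewrite card_gt0; apply: contraNneq ntA => S0.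
by rewrite -eS S0 gen0.
Qed.

Lemma bigmin_le (I : finType) (P : pred I) (F : I -> nat) x j :
  P j -> (\big[minn/x]_(i | P i) F i <= F j)%N.
Proof.
move=> Pj; have : j \in index_enum I by rewrite mem_index_enum.
elim: (index_enum I) => [//|a s IH]; rewrite inE big_cons =>  /orP[/eqP <-| js].
  by rewrite Pj geq_minl.
case: (P a); last exact: IH.
by rewrite (leq_trans (geq_minr _ _)) ?IH.
Qed.

Lemma dgen1 (rT : finGroupType) : dgen (1 : {set rT}) = 0%N.
Proof.
apply/eqP; rewrite -leqn0 -(cards0 rT).
by apply: bigmin_le; rewrite gen0.
Qed.

Lemma KG_eq_min (N0 H : {group gT}) :
  ppow_normal p G H -> ppow_normal p G N0 -> N0 \subset H ->
  H \subset KG H -> H \subset N0.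
Proof.
case/andP=> nH pH /andP[nN pN] sNH sHK.
have nNH : H \subset 'N(N0) := subset_trans (normal_sub nH) (normal_norm nN).
have pQ : p.-group (H / N0).
  rewrite /pgroup card_quotient //.
  by move: pN; rewrite -(Lagrange_index (normal_sub nH) sNH) pnatM => /andP[].
rewrite -quotient_sub1 //; apply/negPn/negP => ntQ.
have ntQ' : (H / N0) != 1 :> {set _}.
  by apply/negP => /eqP E; move: ntQ; rewrite E subxx.
have := Phi_proper ntQ'; rewrite properE => /andP[_ /negP]; apply.
rewrite (Phi_joing pQ).
have sHN : H \subset 'N(N0) := nNH.
apply: subset_trans (quotientS N0 sHK) _.
rewrite /KG /= quotient_gen; last first.
  rewrite subUset (subset_trans (der1_subG H) sHN) /=.
  by apply/subsetP => _ /imsetP[x xH ->]; apply: (subsetP sHN); exact: groupX.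
rewrite gen_subG quotientU subUset; apply/andP; split.
  rewrite quotientR //; exact: joing_subl.
apply/subsetP => _ /morphimP[y Ny /imsetP[x xH ->] ->].
rewrite morphX; last by apply: (subsetP sHN).
apply: (subsetP (joing_subr _ _)).
have := @Mho_p_elt 1 _ (H / N0) p (coset N0 x).
rewrite expn1; apply; first by apply: mem_quotient.
by apply: mem_p_elt pQ _; apply: mem_quotient.
Qed.

End GroupPart.

Local Open Scope ring_scope.

Lemma bigminr_le (I : finType) (P : pred I) (F : I -> rat) x j :
  P j -> \big[Num.min/x]_(i | P i) F i <= F j.
Proof.
move=> Pj; have : j \in index_enum I by rewrite mem_index_enum.
elim: (index_enum I) => [//|a s IH]; rewrite inE big_cons => /orP[/eqP <-| js].
  by rewrite Pj ge_min lexx.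
case: (P a); last exact: IH.
by rewrite ge_min IH ?orbT.
Qed.

Theorem corollary2p8 (p : nat) (gT : finGroupType) (G : {group gT}) :
  prime p -> RGp p G = - ((pcompl_order p G)%:R)^-1.
Proof.
move=> pr.
have fG : ppow_normal p G G by rewrite /ppow_normal normal_refl indexgg.
case: (arg_minnP (fun H : {group gT} => #|H|) fG) => N0 fN0 minN0.
have sub0 : forall H : {group gT}, ppow_normal p G H -> (N0 \subset H)%g.
  move=> H fH; have le := minN0 _ (fam_I fN0 fH).
  apply/setIidPl; apply/eqP; rewrite eqEcard subsetIl le.
  done.
have core : pcompl_core p G = N0.
  apply/eqP; rewrite eqEsubset; apply/andP; split; first exact: bigcap_inf.
  by apply/bigcapsP => H fH; exact: sub0.
have nN0 := (andP fN0).1.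
have ord : pcompl_order p G = #|G : N0|%g.
  by rewrite /pcompl_order core card_quotient // normal_norm.
rewrite ord.
have dp0 : dp p N0 = 0%N.
  have sNK := sub0 _ (KG_fam pr fN0).
  rewrite /dp -[commpow p N0]/(KG p N0 : {set gT}).
  by rewrite quotientS1 // dgen1.
have termN0 : RGterm p G N0 = - (#|G : N0|%g%:R)^-1.
  by rewrite /RGterm dp0 sub0r mulN1r.
have lb : forall H : {group gT}, ppow_normal p G H ->
    - (#|G : N0|%g%:R)^-1 <= RGterm p G H.
  move=> H fH; case: (posnP (dp p H)) => dH.
    have sHN0 : (H \subset N0)%g.
      apply: (KG_eq_min fH fN0 (sub0 _ fH)).
      have nK := KG_normal p (andP fH).1.
      rewrite -quotient_sub1; last first.
        exact: subset_trans (normal_sub (andP fH).1) (normal_norm nK).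
      apply/negPn; apply/negP => nt.
      have := dgen_pos (rT := coset_of (KG p H)) (A := (H / KG p H)%G).
      move: dH; rewrite /dp => ->.
      rewrite ltnn => h; suff: false by []; apply: h.
      apply/negP => /eqP E; case/negP: nt; have E1 : (H / KG p H)%g = 1%g := E; by rewrite E1.
    have -> : H = N0 by apply/val_inj/eqP; rewrite eqEsubset sHN0 sub0.
    by rewrite termN0.
  rewrite /RGterm (le_trans (y := 0)) //; first by rewrite oppr_le0 invr_ge0 ler0n.
  by rewrite divr_ge0 // subr_ge0 ler1n.
apply/eqP; rewrite eq_le; apply/andP; split.
  by rewrite /RGp -termN0; apply: bigminr_le.
rewrite /RGp; apply: (big_ind (fun x => - (#|G : N0|%g%:R)^-1 <= x)).
- exact: lb.
- by move=> x y hx hy; rewrite le_min hx hy.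
- exact: lb.
Qed.
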